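(* Let $G$ be a connected cubic graph on $n$ vertices with $n\equiv 0\pmod 4$. If $G$ has a Xuong tree whose cotree has a unique odd component and this component has at least three edges, then $G$ admits a coherent stable decycling partition, i.e. a partition $\{A,J\}$ of $V(G)$ such that $G[A]$ is a tree and $J$ is independent or near-independent.
   Context: Graphs are finite; loops and multiple edges allowed; a cubic graph is $3$-regular. For connected $G$, $\beta(G)=|E(G)|-|V(G)|+1$; $\gamma_M(G)$ is the largest genus of a closed orientable surface on which $G$ has a cellular embedding; $\xi(G)=\beta(G)-2\gamma_M(G)$. For a spanning tree $T$ the cotree is $G-E(T)$; a component is odd if it has an odd number of edges; $T$ is a Xuong tree if its cotree has exactly $\xi(G)$ odd components. $J$ is independent if $G[J]$ has no edges and near-independent if $G[J]$ has exactly one edge. *)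

(* Defs.v *)
(* A finite multigraph (loops and parallel edges allowed) is
   given by a vertex finType V, an edge finType E and an endpoint map
   ends : E -> V * V (a loop is an edge e with (ends e).1 = (ends e).2). *)
From mathcomp Require Import all_boot all_order all_algebra all_fingroup.
Set Implicit Arguments.
Unset Strict Implicit.
Unset Printing Implicit Defensive.

Section Graph.
Variables (V E : finType) (ends : E -> V * V).

Definition joins (e : E) (x y : V) : bool :=
  (ends e == (x, y)) || (ends e == (y, x)).

(* degree of v; a loop at v counts twice *)
Definition deg (v : V) : nat :=
  #|[set e | (ends e).1 == v]| + #|[set e | (ends e).2 == v]|.

Definition cubic : Prop := forall v, deg v = 3.

Definition adj_in (A : {set V}) (F : {set E}) : rel V :=
  [rel x y | [&& x \in A, y \in A & [exists e in F, joins e x y]]].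

Definition connected_in (A : {set V}) (F : {set E}) : Prop :=
  A != set0 /\ forall x y, x \in A -> y \in A -> connect (adj_in A F) x y.

Definition connected : Prop := connected_in setT setT.

(* F contains a cycle: k+1 >= 1 distinct edges es_0..es_k and distinct
   vertices vs_0..vs_k with es_i joining vs_i and vs_{i+1 mod k+1}
   (a loop is a cycle of length 1, two parallel edges one of length 2) *)
Definition has_cycle_in (F : {set E}) : Prop :=
  exists (k : nat) (es : 'I_k.+1 -> E) (vs : 'I_k.+1 -> V),
    [/\ injective es, injective vs,
        forall i, es i \in F &
        forall i, joins (es i) (vs i) (vs (ordS i))].

Definition induced_edges (A : {set V}) : {set E} :=
  [set e | ((ends e).1 \in A) && ((ends e).2 \in A)].

Definition tree_in (A : {set V}) (F : {set E}) : Prop :=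
  connected_in A F /\ ~ has_cycle_in F.

Definition induced_tree (A : {set V}) : Prop := tree_in A (induced_edges A).

Definition spanning_tree (T : {set E}) : Prop := tree_in setT T.

Definition independent (J : {set V}) : Prop := induced_edges J = set0.
Definition near_independent (J : {set V}) : Prop := #|induced_edges J| = 1.

Definition comp_of (F : {set E}) (v : V) : {set V} :=
  [set u | connect (adj_in setT F) v u].
Definition comps (F : {set E}) : {set {set V}} := [set comp_of F v | v in V].
Definition comp_edges (F : {set E}) (C : {set V}) : {set E} :=
  [set e in F | (ends e).1 \in C].
Definition odd_comps (F : {set E}) : {set {set V}} :=
  [set C in comps F | odd #|comp_edges F C|].
Definition cotree (T : {set E}) : {set E} := ~: T.

(* darts: (e, true) is e leaving (ends e).1, (e, false) leaving (ends e).2 *)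
Local Notation dart := (E * bool)%type.
Definition dtail (d : dart) : V := if d.2 then (ends d.1).1 else (ends d.1).2.
Definition dinv (d : dart) : dart := (d.1, ~~ d.2).

Definition rotation (rho : {perm dart}) : bool :=
  [forall d, dtail (rho d) == dtail d] &&
  [forall d, forall d', (dtail d == dtail d') ==> fconnect rho d d'].

(* number of faces of the embedding = orbits of rho o dinv *)
Definition faces (rho : {perm dart}) : nat :=
  fcard (fun d => rho (dinv d)) (@predT dart).

(* Euler's formula: |V| - |E| + F = 2 - 2 g *)
Definition genus (rho : {perm dart}) : nat :=
  (2 + #|E| - #|V| - faces rho)./2.

Definition max_genus : nat := \max_(rho : {perm dart} | rotation rho) genus rho.

Definition xi : int := (Posz #|E| - Posz #|V| + 1 - 2 * Posz max_genus)%R.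

Definition xuong_tree (T : {set E}) : Prop :=
  spanning_tree T /\ Posz #|odd_comps (cotree T)| = xi.

End Graph.

(* Main.v *)
Require Import Defs.
From mathcomp Require Import all_boot all_order all_algebra all_fingroup.
From mathcomp Require Import zify.
Set Implicit Arguments.
Unset Strict Implicit.
Unset Printing Implicit Defensive.

Section Helpers.
Variables (V E : finType) (ends : E -> V * V).

Definition incd (v : V) : {set E} :=
  [set e | ((ends e).1 == v) || ((ends e).2 == v)].

Lemma inc_le3 : cubic ends -> forall v, #|incd v| <= 3.
Proof.
move=> cub v; have := cub v; rewrite /deg => <-.
have -> : incd v = [set e | (ends e).1 == v] :|: [set e | (ends e).2 == v].
  by apply/setP=> e; rewrite !inE.
by rewrite -cardsUI leq_addr.
Qed.

Lemma joins_sym e x y : joins ends e x y = joins ends e y x.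
Proof. by rewrite /joins orbC. Qed.

Lemma joins_incl e x y : joins ends e x y -> e \in incd x.
Proof. by rewrite /joins !inE => /orP[]/eqP -> /=; rewrite eqxx ?orbT. Qed.

Lemma joins_incr e x y : joins ends e x y -> e \in incd y.
Proof. rewrite joins_sym; exact: joins_incl. Qed.

Lemma joins_other e a b u w : joins ends e a b -> joins ends e u w ->
  b \in [set u; w].
Proof.
rewrite /joins => /orP[]/eqP E1 /orP[]/eqP; rewrite E1;
by move=> []; intros; subst; rewrite !inE eqxx ?orbT.
Qed.

Lemma joins_eq e x y s : joins ends e x y -> joins ends e y s -> x = s.
Proof.
rewrite /joins => /orP[]/eqP E1 /orP[]/eqP; rewrite E1; by move=> []; intros; subst.
Qed.

Lemma joins_ends e : joins ends e (ends e).1 (ends e).2.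
Proof. by rewrite /joins -surjective_pairing eqxx. Qed.

Lemma adj_sym A F0 : symmetric (adj_in ends A F0).
Proof.
move=> x y; apply/idP/idP => /and3P[xa ya /existsP[e /andP[eF j]]];
by apply/and3P; split => //; apply/existsP; exists e; rewrite eF joins_sym.
Qed.

Lemma connect_closedS (r : rel V) (S : {set V}) x y :
  (forall a b, a \in S -> r a b -> b \in S) -> x \in S -> connect r x y -> y \in S.
Proof.
move=> cl xS /connectP [p pth ->].
elim: p x xS pth => [|a p IH] x xS //= /andP[rxa pth].
exact: IH (cl _ _ xS rxa) pth.
Qed.

Lemma has_cycle_mono (F1 F2 : {set E}) : F1 \subset F2 -> has_cycle_in ends F1 -> has_cycle_in ends F2.
Proof.
move=> /subsetP sub [k [es [vs [i1 i2 h1 h2]]]].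
by exists k, es, vs; split => // i; apply: sub.
Qed.

Lemma two_out v f1 f2 : #|incd v| <= 3 -> f1 != f2 -> f1 \in incd v -> f2 \in incd v ->
  #|incd v :\ f1 :\ f2| <= 1.
Proof.
move=> le3 ne i1 i2.
have := cardsD1 f1 (incd v); have := cardsD1 f2 (incd v :\ f1).
rewrite in_setD1 eq_sym ne i1 i2 /=. lia.
Qed.

Variable F : {set E}.
Definition dhead (o : {ffun E -> bool}) e := if o e then (ends e).1 else (ends e).2.
Definition indeg o v := #|[set e in F | dhead o e == v]|.
Definition oflip (o : {ffun E -> bool}) e0 : {ffun E -> bool} :=
  [ffun e => if e == e0 then ~~ o e else o e].

Lemma indeg_flip o e0 v : e0 \in F ->
  odd (indeg (oflip o e0) v) = odd (indeg o v) (+) (v == (ends e0).1) (+) (v == (ends e0).2).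
Proof.
rewrite /indeg => e0F.
rewrite (cardsD1 e0 [set e in F | dhead (oflip o e0) e == v]).
rewrite (cardsD1 e0 [set e in F | dhead o e == v]).
have -> : [set e in F | dhead (oflip o e0) e == v] :\ e0 = [set e in F | dhead o e == v] :\ e0.
  apply/setP=> e; rewrite !inE /dhead ffunE.
  by case: (eqVneq e e0).
rewrite !oddD !inE e0F /= /dhead ffunE eqxx.
rewrite ![_ == v]eq_sym.
set b := odd #|_|.
case: (o e0) => /=; case: (v == (ends e0).1); case: (v == (ends e0).2); by case: b.
Qed.

Lemma path_flip p : forall x o, path (adj_in ends setT F) x p -> exists o',
  forall v, odd (indeg o' v) = odd (indeg o v) (+) (v == x) (+) (v == last x p).
Proof.
elim: p => [|y p IH] x o /=.
  by move=> _; exists o => v; rewrite -addbA addbb addbF.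
case/andP => /and3P[_ _ /existsP[e /andP[eF je]]] pth.
have [o1 H1] := IH y o pth.
exists (oflip o1 e) => v; rewrite indeg_flip // H1.
case/orP: je => /eqP -> /=;
by case: (v == x); case: (v == y); case: (v == last y p); case: (odd _).
Qed.

Lemma head_inc o e : e \in incd (dhead o e).
Proof. by rewrite /dhead !inE; case: (o e); rewrite eqxx ?orbT. Qed.

Lemma comp_sum o (K : {set V}) :
  (forall e, e \in F -> ((ends e).1 \in K) = ((ends e).2 \in K)) ->
  \sum_(v in K) indeg o v = #|comp_edges ends F K|.
Proof.
move=> Kcl.
have -> : comp_edges ends F K = [set e in F | dhead o e \in K].
  apply/setP => e; rewrite !inE /dhead.
  case eF: (e \in F) => //=.
  by case: (o e); rewrite // Kcl.
rewrite -sum1dep_card (partition_big (dhead o) (mem K)); last first.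
  by move=> e /andP[].
apply: eq_bigr => v vK; rewrite /indeg -sum1dep_card.
apply: eq_bigl => e.
by case: (e \in F); case: eqP => [->|]; rewrite ?vK ?andbF.
Qed.

Lemma odd_sum_one (K : {set V}) (f : V -> nat) x : x \in K ->
  (forall v, v \in K -> v != x -> ~~ odd (f v)) ->
  odd (\sum_(v in K) f v) = odd (f x).
Proof.
move=> xK ev; rewrite (bigD1 x) //= oddD.
suff -> : odd (\sum_(i in K | i != x) f i) = false by rewrite addbF.
apply/negbTE; elim/big_ind: _ => //.
  by move=> a b Ha Hb; rewrite oddD (negbTE Ha) (negbTE Hb).
by move=> i /andP[iK ix]; apply: ev.
Qed.

End Helpers.

Unset Implicit Arguments.

Theorem corollary3 (V E : finType) (ends : E -> V * V) :
  connected ends -> cubic ends -> #|V| %% 4 = 0 ->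
  (exists T : {set E}, xuong_tree ends T /\
     exists C : {set V}, odd_comps ends (cotree T) = [set C] /\
       3 <= #|comp_edges ends (cotree T) C|) ->
  exists A J : {set V},
    [/\ A :&: J = set0, A :|: J = setT, induced_tree ends A &
        independent ends J \/ near_independent ends J].
Proof.
move=> conn cub n4 [T [[[[_ Tconn] Tacyc] _] [C [oddC C3]]]].
set F := cotree T in oddC C3.
have nV : 0 < #|[set: V]| by rewrite card_gt0; case: conn.
have n_ge4 : 4 <= #|V| by move: nV; rewrite cardsT; lia.
have deg3 := inc_le3 cub.
have FT e : (e \in F) = (e \notin T) by rewrite inE.
have TFne g f : g \in T -> f \in F -> g != f.
  by move=> gT fF; apply/eqP => E0; rewrite -E0 FT gT in fF.
have Tinc v : exists2 g, g \in T & g \in incd ends v.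
  have [u uv] : exists u, u != v.
    have : 0 < #|[set~ v]| by rewrite cardsC1; lia.
    by case/card_gt0P => u; rewrite !inE => ?; exists u.
  have := Tconn v u (in_setT v) (in_setT u); case/connectP => p.
  case: p => [|y p] /=; first by move=> _ E0; rewrite E0 eqxx in uv.
  case/andP => /and3P[_ _ /existsP[g /andP[gT jg]]] _ _.
  by exists g => //; apply: joins_incl jg.
have oddK K : K \in comps ends F -> odd #|comp_edges ends F K| -> K = C.
  move=> Kc Ko; have : K \in odd_comps ends F by rewrite inE Kc Ko.
  by rewrite oddC => /set1P.
have adjF_sym := adj_sym ends setT F.
have csym := sym_connect_sym adjF_sym.
have adjF e : e \in F -> adj_in ends setT F (ends e).1 (ends e).2.
  by move=> eF; apply/and3P; split => //; apply/existsP; exists e; rewrite eF joins_ends.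
have compK x : forall e, e \in F ->
    ((ends e).1 \in comp_of ends F x) = ((ends e).2 \in comp_of ends F x).
  move=> e eF; rewrite !inE; apply/idP/idP => H; apply: connect_trans H _;
  apply: connect1; last rewrite adjF_sym; exact: adjF.
have comp_in x : comp_of ends F x \in comps ends F by apply/imsetP; exists x.
pose leaf v := forall g1 g2, g1 \in T -> g2 \in T -> g1 \in incd ends v ->
  g2 \in incd ends v -> g1 = g2.
have leaf_no g u w : g \in T -> joins ends g u w -> leaf u -> leaf w -> False.
  move=> gT jg lu lw.
  have cl : forall a b, a \in [set u; w] -> adj_in ends setT T a b -> b \in [set u; w].
    move=> a b aS /and3P[_ _ /existsP[g' /andP[g'T jg']]].
    have eg : g' = g.
      move: aS; rewrite !inE => /orP[]/eqP Ea; subst a.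
        by apply: lu => //; [exact: joins_incl jg' | exact: joins_incl jg].
      by apply: lw => //; [exact: joins_incl jg' | exact: joins_incr jg].
    rewrite eg in jg'; exact: joins_other jg' jg.
  have allS v : v \in [set u; w].
    have := Tconn u v (in_setT _) (in_setT _). apply: (connect_closedS cl (set21 u w)).
  have : #|[set: V]| <= #|[set u; w]|.
    by apply: subset_leq_card; apply/subsetP => v _; exact: allS.
  rewrite cardsT cards2; have : (u != w).+1 <= 2 by case: (u != w).
  lia.
have noloopF e : e \in F -> (ends e).1 != (ends e).2.
  move=> eF; apply/negP => /eqP Eq.
  have inc2 : #|incd ends (ends e).1| <= 2.
    have := cub (ends e).1; rewrite /deg.
    have -> : incd ends (ends e).1 = [set e' | (ends e').1 == (ends e).1]
        :|: [set e' | (ends e').2 == (ends e).1] by apply/setP=> e'; rewrite !inE.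
    rewrite -cardsUI => H.
    have : 0 < #|[set e' | (ends e').1 == (ends e).1] :&: [set e' | (ends e').2 == (ends e).1]|.
      by apply/card_gt0P; exists e; rewrite !inE -Eq eqxx.
    lia.
  set v := (ends e).1 in inc2 Eq.
  have [g gT gi] := Tinc v.
  have ev : e \in incd ends v by rewrite inE eqxx.
  have ge : g != e := TFne g e gT eF.
  have onlye e' : e' \in F -> e' \in incd ends v -> e' = e.
    move=> e'F e'i; apply/eqP; apply/negPn/negP => ne.
    have : #|incd ends v :\ e| <= 1 by have := cardsD1 e (incd ends v); rewrite ev; lia.
    move/card_le1_eqP => H.
    have gi' : g \in incd ends v :\ e by rewrite in_setD1 ge gi.
    have ei' : e' \in incd ends v :\ e by rewrite in_setD1 ne e'i.
    have Ege := H g e' gi' ei'.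
    by move: (TFne g e' gT e'F); rewrite Ege eqxx.
  have compv : comp_of ends F v = [set v].
    apply/setP => u; rewrite !inE; apply/idP/idP => [H|/eqP ->]; last exact: connect0.
    have cl : forall a b, a \in [set v] -> adj_in ends setT F a b -> b \in [set v].
      move=> a b /set1P -> /and3P[_ _ /existsP[e' /andP[e'F je']]].
      have Ee' := onlye e' e'F (joins_incl je'). rewrite Ee' in je'.
      have := joins_other je' (joins_ends ends e). by rewrite !inE -/v -Eq orbb.
    by have := connect_closedS cl (set11 v) H; rewrite inE.
  have ce : comp_edges ends F [set v] = [set e].
    apply/setP => e'; rewrite !inE; apply/idP/idP => [/andP[e'F /eqP h]| /eqP ->].
        by apply/eqP; apply: (onlye e'); [rewrite FT | rewrite inE h eqxx].
    by rewrite -FT eF eqxx.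
  have := oddK _ (comp_in v); rewrite compv ce cards1 => /(_ isT) HC.
  by move: C3; rewrite -HC ce cards1.
have [z zC [f1 [f2 [f12 f1F f2F f1z f2z]]]] : exists2 z, z \in C &
    exists f1 f2, [/\ f1 != f2, f1 \in F, f2 \in F, f1 \in incd ends z & f2 \in incd ends z].
  have : C \in odd_comps ends F by rewrite oddC set11.
  rewrite inE => /andP[/imsetP[c _ EC] _].
  have : 0 < #|comp_edges ends F C| by lia.
  case/card_gt0P => e1; rewrite inE => /andP[e1F aC].
  have bC : (ends e1).2 \in C.
    rewrite EC inE; rewrite EC inE in aC; apply: connect_trans aC _; exact: connect1 (adjF _ e1F).
  case: (boolP [exists f, [&& f \in F, f \in incd ends (ends e1).1 & f != e1]]) =>
      [/existsP[f /and3P[fF fi fne]]|na].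
    exists (ends e1).1 => //; exists f, e1; split => //; exact: joins_incl (joins_ends ends e1).
  case: (boolP [exists f, [&& f \in F, f \in incd ends (ends e1).2 & f != e1]]) =>
      [/existsP[f /and3P[fF fi fne]]|nb].
    exists (ends e1).2 => //; exists f, e1; split => //; exact: joins_incr (joins_ends ends e1).
  exfalso.
  have only f x : f \in F -> x \in [set (ends e1).1; (ends e1).2] -> f \in incd ends x -> f = e1.
    move=> fF; rewrite in_set2 => /orP[]/eqP -> fi; apply/eqP; apply/negPn/negP => ne.
      by move/negP: na; apply; apply/existsP; exists f; rewrite fF fi ne.
    by move/negP: nb; apply; apply/existsP; exists f; rewrite fF fi ne.
  have cl : forall x y, x \in [set (ends e1).1; (ends e1).2] -> adj_in ends setT F x y ->
      y \in [set (ends e1).1; (ends e1).2].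
    move=> x y xS /and3P[_ _ /existsP[f /andP[fF jf]]].
    have Ef := only f x fF xS (joins_incl jf). rewrite Ef in jf.
    exact: joins_other jf (joins_ends ends e1).
  have sub : comp_edges ends F C \subset [set e1].
    apply/subsetP => f /setIdP[fF fC]; apply/set1P.
    apply: (only f (ends f).1 fF); last by rewrite inE eqxx.
    rewrite EC inE in fC; rewrite EC inE in aC.
    have ac : connect (adj_in ends setT F) (ends e1).1 c by rewrite csym.
    exact: connect_closedS cl (set21 _ _) (connect_trans ac fC).
  have := subset_leq_card sub; rewrite cards1; lia.
pose P (o : {ffun E -> bool}) := #|[set v | odd (indeg ends F o v)] :\ z|.
have [o _ omin] := @arg_minnP _ [ffun=> true] predT P isT.
have oddz x : odd (indeg ends F o x) -> x = z.
  move=> ox; case: (eqVneq x z) => // xz; exfalso.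
  have flipc y : connect (adj_in ends setT F) x y -> y != x ->
      (y == z) || odd (indeg ends F o y) -> False.
    move=> /connectP[p pth ->] yx yc.
    have [o' Ho'] := path_flip o pth.
    set L := last x p in yx yc Ho'.
    have sub : [set v | odd (indeg ends F o' v)] :\ z \subset
        ([set v | odd (indeg ends F o v)] :\ z) :\ x.
      apply/subsetP => v; rewrite !in_setD1 !inE Ho' => /andP[vz].
      case: (eqVneq v x) => [->|vx] /=.
        by rewrite ox eq_sym (negbTE yx).
      case: (eqVneq v L) => [Ev|vL] /=; last by rewrite vz !addbF.
      move: yc; rewrite -Ev (negbTE vz) /= => ->. done.
    have := subset_leq_card sub.
    have := cardsD1 x ([set v | odd (indeg ends F o v)] :\ z).
    rewrite in_setD1 inE ox xz /=.
    have := omin o' isT; rewrite /P. lia.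
  set K := comp_of ends F x.
  have xK : x \in K by rewrite inE connect0.
  have zK : z \notin K.
    apply/negP; rewrite inE => cz; apply: (flipc z cz); by rewrite ?eqxx // eq_sym.
  have evK v : v \in K -> v != x -> ~~ odd (indeg ends F o v).
    rewrite inE => cv vx; apply/negP => ov; apply: (flipc v cv vx); by rewrite ov orbT.
  have := comp_sum o (compK x); move=> /(congr1 odd).
  rewrite (odd_sum_one xK evK) ox => /esym Ko.
  have EK := oddK _ (comp_in x) Ko.
  by move: zK; rewrite /K EK zC.
pose J := [set v | 0 < indeg ends F o v].
have headJ e : e \in F -> dhead ends o e \in J.
  by move=> eF; rewrite inE; apply/card_gt0P; exists e; rewrite inE eF eqxx.
have Jeven v : v \in J -> v != z -> exists f1 f2,
    [/\ f1 != f2, f1 \in F, f2 \in F, dhead ends o f1 = v & dhead ends o f2 = v].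
  rewrite inE => vpos vz.
  have ev : ~~ odd (indeg ends F o v).
    by apply/negP => /oddz Evz; rewrite Evz eqxx in vz.
  have : 1 < indeg ends F o v by move: vpos ev; case: (indeg ends F o v) => [|[|n]].
  rewrite /indeg; case/card_gt1P => g1 [g2 [g1S g2S ne]].
  move: g1S g2S; rewrite !inE => /andP[g1F /eqP h1] /andP[g2F /eqP h2].
  by exists g1, g2; split => //; rewrite FT.
have Jtwo v : v \in J -> exists f1 f2,
    [/\ f1 != f2, f1 \in F, f2 \in F, f1 \in incd ends v & f2 \in incd ends v].
  move=> vJ; case: (eqVneq v z) => [->|vz]; first by exists f1, f2.
  have [g1 [g2 [ne g1F g2F h1 h2]]] := Jeven v vJ vz.
  by exists g1, g2; split => //; [rewrite -h1 | rewrite -h2]; exact: head_inc.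
have Jleaf v : v \in J -> leaf v.
  move=> vJ g1 g2 g1T g2T g1i g2i.
  have [h1 [h2 [ne h1F h2F h1i h2i]]] := Jtwo v vJ.
  have /card_le1_eqP H := two_out (deg3 v) ne h1i h2i.
  have mem g : g \in T -> g \in incd ends v -> g \in incd ends v :\ h1 :\ h2.
    by move=> gT gi; rewrite !in_setD1 gi (TFne g h1 gT h1F) (TFne g h2 gT h2F).
  by have E1 := H g1 g2 (mem g1 g1T g1i) (mem g2 g2T g2i); rewrite E1.
have noTJ g : g \in T -> ~~ (((ends g).1 \in J) && ((ends g).2 \in J)).
  move=> gT; apply/negP => /andP[a b].
  exact: leaf_no gT (joins_ends ends g) (Jleaf _ a) (Jleaf _ b).
pose A := ~: J.
have pathA p x : x \in A -> path (adj_in ends setT T) x p -> uniq (x :: p) ->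
    last x p \in A -> path (adj_in ends A (induced_edges ends A)) x p.
  elim: p x => [|y p IH] x xA //= /andP[axy pth] /andP[xnin uq] lA.
  have yA : y \in A.
    move: pth xnin uq lA IH; case: p => [|s p] //= /andP[ays _] xnin _ _ _.
    rewrite inE; apply/negP => yJ.
    case/and3P: axy => _ _ /existsP[g1 /andP[g1T j1]].
    case/and3P: ays => _ _ /existsP[g2 /andP[g2T j2]].
    have Eg := Jleaf y yJ g1 g2 g1T g2T (joins_incr j1) (joins_incl j2).
    rewrite Eg in j1; have Exs := joins_eq j1 j2.
    by rewrite Exs !inE eqxx !orbT in xnin.
  rewrite (IH y yA pth uq lA) andbT; apply/and3P; split => //.
  case/and3P: axy => _ _ /existsP[g /andP[gT jg]]; apply/existsP; exists g.
  rewrite jg andbT inE; by case/orP: jg => /eqP -> /=; rewrite xA yA.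
exists A, J; split.
- by rewrite /A setIC setICr.
- by rewrite /A setUC setUCr.
- split; [split|].
  + have [v0 _] := card_gt0P nV.
    have [g gT _] := Tinc v0.
    apply/set0Pn; case/nandP: (noTJ g gT) => H;
      [exists (ends g).1 | exists (ends g).2]; by rewrite inE.
  + move=> x y xA yA.
    have := Tconn x y (in_setT _) (in_setT _); case/connectP => p pth Ey; subst y.
    move: yA; case: (shortenP pth) => p' pth' uq _ yA.
    by apply/connectP; exists p' => //; apply: pathA.
  + move=> cyc; apply: Tacyc; apply: has_cycle_mono _ cyc.
    apply/subsetP => e; rewrite inE => /andP[a b].
    apply/negPn/negP => eT.
    have eF : e \in F by rewrite FT.
    have := headJ e eF.
    rewrite /dhead; rewrite !in_setC in a b; case: (o e) => H.
      by rewrite H in a.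
    by rewrite H in b.
- have key e : e \in induced_edges ends J ->
      [/\ e \in F, e \in incd ends z, dhead ends o e != z & z \in J].
    rewrite inE => /andP[a b].
    have eF : e \in F.
      by rewrite FT; apply/negP => eT; have := noTJ e eT; rewrite a b.
    pose t := if o e then (ends e).2 else (ends e).1.
    have tJ : t \in J by rewrite /t; case: (o e).
    have ht : dhead ends o e != t.
      have := noloopF e eF; rewrite /t /dhead; case: (o e) => //; by rewrite eq_sym.
    have et : e \in incd ends t by rewrite /t inE; case: (o e); rewrite eqxx ?orbT.
    have tz : t = z.
      case: (eqVneq t z) => // tz; exfalso.
      have [g1 [g2 [ne g1F g2F h1 h2]]] := Jeven t tJ tz.
      have i1 : g1 \in incd ends t by rewrite -h1 head_inc.
      have i2 : g2 \in incd ends t by rewrite -h2 head_inc.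
      have /card_le1_eqP H := two_out (deg3 t) ne i1 i2.
      have [g gT gi] := Tinc t.
      have eI : e \in incd ends t :\ g1 :\ g2.
        rewrite !in_setD1 et andbT; apply/andP; split.
          by apply: contraNneq ht => ->; rewrite h2.
        by apply: contraNneq ht => ->; rewrite h1.
      have gI : g \in incd ends t :\ g1 :\ g2.
        by rewrite !in_setD1 gi (TFne g g1 gT g1F) (TFne g g2 gT g2F).
      have Eeg := H e g eI gI.
      by move: (TFne g e gT eF); rewrite Eeg eqxx.
    by split => //; rewrite -tz.
  case: (eqVneq (induced_edges ends J) set0) => [E0|ne]; [left|right] => //.
  have [e0 e0I] := set0Pn _ ne.
  have [_ _ _ zJ] := key e0 e0I.
  move: (zJ); rewrite inE => /card_gt0P[f0]; rewrite inE => /andP[f0F /eqP hf0].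
  have [g gT gi] := Tinc z.
  have f0i : f0 \in incd ends z by rewrite -hf0 head_inc.
  have H := two_out (deg3 z) (TFne g f0 gT f0F) gi f0i.
  have sub : induced_edges ends J \subset incd ends z :\ g :\ f0.
    apply/subsetP => e eI; have [eF ez hz _] := key e eI.
    rewrite !in_setD1 ez andbT; apply/andP; split.
      by apply: contraNneq hz => ->; rewrite hf0.
    by rewrite eq_sym (TFne g e gT eF).
  rewrite /near_independent; apply/eqP; rewrite eqn_leq (leq_trans (subset_leq_card sub) H).
  by rewrite card_gt0 ne.
Qed.
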